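(* Let $(S,d)$ be a connected metric space. Then $J^S_\bullet\subset\operatorname{ext}(B^S_\bullet)$ for $\bullet=\mathrm{FM}$ and for $\bullet=\mathrm{BL}$.
   Context: $\mathrm{BL}(S)$ is the space of bounded real-valued Lipschitz functions on $S$, $|f|_L=\sup_{x\neq y}|f(x)-f(y)|/d(x,y)$, $\|f\|_{\mathrm{BL}}=\|f\|_\infty+|f|_L$, $\|f\|_{\mathrm{FM}}=\max(\|f\|_\infty,|f|_L)$, $B^S_\bullet=\{f\in\mathrm{BL}(S):\|f\|_\bullet\le1\}$, $\operatorname{ext}$ denotes the set of extreme points. For $f\in\mathrm{BL}(S)$, $M_f=\{x\in S:|f(x)|=\|f\|_\infty\}$. $J^S_{\mathrm{FM}}$ is the set of $f\in B^S_{\mathrm{FM}}$ with $\|f\|_\infty=1$ for which there is a finite non-empty $P_f\subset S$ such that for every $x\in S\setminus M_f$ there exists $p\in P_f$ with $|f(x)-f(p)|=d(x,p)$. $J^S_{\mathrm{BL}}=\{\mathbf{1},-\mathbf{1}\}\cup\hat J^S_{\mathrm{BL}}$, where $\hat J^S_{\mathrm{BL}}$ is the set of $f\in B^S_{\mathrm{BL}}$ with $\|f\|_{\mathrm{BL}}=1$, $f(M_f)=\{\|f\|_\infty,-\|f\|_\infty\}$, and for which there is a finite non-empty $P_f\subset S$ such that for every $x\in S\setminus M_f$ there exists $p\in P_f$ with $|f(x)-f(p)|=(1-\|f\|_\infty)d(x,p)$. *)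

(* Defs.v *)
From HB Require Import structures.
From mathcomp Require Import all_boot all_order all_algebra.
From mathcomp Require Import all_classical all_reals.
Set Implicit Arguments. Unset Strict Implicit. Unset Printing Implicit Defensive.
Import Order.TTheory GRing.Theory Num.Theory.
Local Open Scope classical_set_scope.
Local Open Scope ring_scope.

Section Defs.
Variables (R : realType) (S : Type) (d : S -> S -> R).

Definition is_metric : Prop :=
  (forall x y, d x y = 0 <-> x = y) /\
  (forall x y, d x y = d y x) /\
  (forall x y z, d x z <= d x y + d y z).

Definition metric_open (U : set S) : Prop :=
  forall x, U x -> exists2 e : R, 0 < e & forall y, d x y < e -> U y.

Definition metric_connected : Prop :=
  forall U : set S, metric_open U -> metric_open (~` U) -> U = set0 \/ U = setT.

Definition is_bounded (f : S -> R) : Prop :=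
  exists M : R, forall x, `|f x| <= M.
Definition is_lipschitz (f : S -> R) : Prop :=
  exists L : R, forall x y, `|f x - f y| <= L * d x y.

Definition BL (f : S -> R) : Prop := is_bounded f /\ is_lipschitz f.

Definition sup_norm (f : S -> R) : R := sup [set `|f x| | x in [set: S]].
Definition lip_const (f : S -> R) : R :=
  sup [set r | exists x y, x <> y /\ r = `|f x - f y| / d x y].

Definition BL_norm (f : S -> R) : R := sup_norm f + lip_const f.
Definition FM_norm (f : S -> R) : R := Num.max (sup_norm f) (lip_const f).

Definition ball_BL : set (S -> R) := [set f | BL f /\ BL_norm f <= 1].
Definition ball_FM : set (S -> R) := [set f | BL f /\ FM_norm f <= 1].

Definition Mset (f : S -> R) : set S := [set x | `|f x| = sup_norm f].

Definition J_FM : set (S -> R) :=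
  [set f | ball_FM f /\ sup_norm f = 1 /\
     exists P : set S, finite_set P /\ P !=set0 /\
       forall x, ~ Mset f x -> exists2 p, P p & `|f x - f p| = d x p].

Definition hatJ_BL : set (S -> R) :=
  [set f | ball_BL f /\ BL_norm f = 1 /\
     (forall y, (exists2 x, Mset f x & f x = y) <->
                (y = sup_norm f \/ y = - sup_norm f)) /\
     exists P : set S, finite_set P /\ P !=set0 /\
       forall x, ~ Mset f x -> exists2 p, P p &
         `|f x - f p| = (1 - sup_norm f) * d x p].

Definition J_BL : set (S -> R) :=
  [set f | f = (fun _ => 1) \/ f = (fun _ => -1) \/ hatJ_BL f].

End Defs.

Definition extreme_points (R : realType) (S : Type) (A : set (S -> R)) : set (S -> R) :=
  [set f | A f /\ forall (g h : S -> R) (t : R), A g -> A h -> 0 < t -> t < 1 ->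
       f = (fun x => t * g x + (1 - t) * h x) -> g = h].

(* Main.v *)
Require Import Defs.
From HB Require Import structures.
From mathcomp Require Import all_boot all_order all_algebra.
From mathcomp Require Import all_classical all_reals.
From mathcomp Require Import lra ring.
Set Implicit Arguments. Unset Strict Implicit. Unset Printing Implicit Defensive.
Import Order.TTheory GRing.Theory Num.Theory.
Local Open Scope classical_set_scope.
Local Open Scope ring_scope.

Section Aux.
Variable R : realType.

Lemma conv_top (t a b A B : R) : 0 < t -> t < 1 -> a <= A -> b <= B ->
  t * a + (1 - t) * b = t * A + (1 - t) * B -> a = A /\ b = B.
Proof.
move=> t0 t1 aA bB e.
have h1 : 0 <= t * (A - a) by apply: mulr_ge0; lra.
have h2 : 0 <= (1 - t) * (B - b) by apply: mulr_ge0; lra.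
have e1 : t * (A - a) = 0 by lra.
have e2 : (1 - t) * (B - b) = 0 by lra.
move: e1 e2 => /eqP; rewrite mulf_eq0 => /orP[/eqP|/eqP]; try lra.
move=> ? /eqP; rewrite mulf_eq0 => /orP[/eqP|/eqP]; lra.
Qed.

Lemma norm_cases (z D : R) : `|z| = D -> z = D \/ z = - D.
Proof.
case: (lerP 0 z) => h.
  by rewrite ger0_norm // => ->; left.
by rewrite ltr0_norm // => <-; right; rewrite opprK.
Qed.

Lemma sep_seq (s : seq R) (a : R) : exists2 e : R, 0 < e &
  forall v, v \in s -> v != a -> e <= `|v - a|.
Proof.
elim: s => [|w s [e e0 He]]; first by exists 1 => // v.
have [wa|wa] := eqVneq w a.
  exists e => // v; rewrite in_cons => /orP[/eqP->|]; last exact: He.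
  by rewrite wa eqxx.
exists (Num.min e `|w - a|).
  by rewrite lt_min e0 normr_gt0 subr_eq0 wa.
move=> v; rewrite in_cons => /orP[/eqP->|vs va]; first by rewrite ge_min lexx orbT.
by rewrite ge_min He.
Qed.

Lemma sep_fin (V : set R) (a : R) : finite_set V -> exists2 e : R, 0 < e &
  forall v, V v -> v <> a -> e <= `|v - a|.
Proof.
move=> /finite_seqP[s ->]; have [e e0 He] := sep_seq s a.
exists e => // v /= vs va; apply: He => //; exact/eqP.
Qed.

Lemma sup_ge0 (E : set R) : (forall r, E r -> 0 <= r) -> 0 <= sup E.
Proof.
move=> H; have [[[r Er] ub]|ns] := pselect (has_sup E).
  by apply: le_trans (H r Er) _; apply: ub_le_sup.
by rewrite sup_out.
Qed.

Lemma bnd_neg (t c hy : R) : 0 < t -> t < 1 -> c < 0 -> -1 <= hy + c -> hy <= 1 ->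
 (- (1 - - (t * (1-t) * c)) <= t * (hy + c) + (1 - t) * hy) /\ (t * (hy + c) + (1 - t) * hy <= 1 - - (t * (1-t) * c)).
Proof.
move=> t0 t1 c0 h1 h2.
have H1 : 0 <= (1 - t) * (1 - t) * (- c) by apply: mulr_ge0; [apply: mulr_ge0|]; lra.
have H2 : 0 <= t * t * (- c) by apply: mulr_ge0; [apply: mulr_ge0|]; lra.
split; nra.
Qed.
Lemma bnd_pos (t c hy : R) : 0 < t -> t < 1 -> 0 < c -> -1 <= hy -> hy + c <= 1 ->
 (- (1 - (t * (1-t) * c)) <= t * (hy + c) + (1 - t) * hy) /\ (t * (hy + c) + (1 - t) * hy <= 1 - (t * (1-t) * c)).
Proof.
move=> t0 t1 c0 h1 h2.
have H1 : 0 <= (1 - t) * (1 - t) * c by apply: mulr_ge0; [apply: mulr_ge0|]; lra.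
have H2 : 0 <= t * t * c by apply: mulr_ge0; [apply: mulr_ge0|]; lra.
split; nra.
Qed.

Lemma sup_le_M (E : set R) M : 0 <= M -> (forall r, E r -> r <= M) -> sup E <= M.
Proof.
move=> M0 H; have [[r Er]|ne] := pselect (E !=set0); first by apply: ge_sup; [exists r|].
have -> : E = set0 by apply/seteqP; split => q // Eq; apply: ne; exists q.
by rewrite sup0.
Qed.

End Aux.

Section Met.
Variables (R : realType) (S : Type) (d : S -> S -> R).
Hypothesis hd : is_metric d.

Lemma d_xx x : d x x = 0.
Proof. by case: hd => h _; apply/h. Qed.

Lemma d_ge0 x y : 0 <= d x y.
Proof.
case: hd => _ [hs ht]; have := ht x y x; rewrite d_xx (hs y x); lra.
Qed.

Lemma d_gt0 x y : x <> y -> 0 < d x y.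
Proof.
move=> xy; rewrite lt_neqAle d_ge0 andbT; apply/eqP => e.
by case: hd => h _; apply: xy; apply/h.
Qed.

Lemma sup_norm_ub (f : S -> R) x : is_bounded f -> `|f x| <= sup_norm f.
Proof.
move=> [M HM]; apply: ub_le_sup; last by exists x.
by exists M => r [y _ <-].
Qed.

Lemma sup_norm_le (f : S -> R) (x0 : S) M : (forall x, `|f x| <= M) -> sup_norm f <= M.
Proof.
move=> H; apply: ge_sup; first by exists `|f x0|, x0.
by move=> r [y _ <-].
Qed.

Lemma lip_ub (f : S -> R) x y : is_lipschitz d f ->
  `|f x - f y| <= lip_const d f * d x y.
Proof.
move=> [K HK]; have [->|xy] := pselect (x = y).
  by rewrite subrr normr0 d_xx mulr0.
have dp := d_gt0 xy.
rewrite -ler_pdivrMr //; apply: ub_le_sup; last by exists x, y.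
exists K => r [a [b [ab ->]]]; rewrite ler_pdivrMr; first exact: HK.
exact: d_gt0.
Qed.

Lemma lip_ge0 (f : S -> R) : 0 <= lip_const d f.
Proof.
apply: sup_ge0 => r [a [b [ab ->]]]; apply: divr_ge0 => //; exact: d_ge0.
Qed.

Lemma lip_le (f : S -> R) M : 0 <= M ->
  (forall x y, x <> y -> `|f x - f y| <= M * d x y) -> lip_const d f <= M.
Proof.
move=> M0 H; have [[r Er]|ne] := pselect ([set r | exists x y, x <> y /\ r = `|f x - f y| / d x y] !=set0).
  apply: ge_sup; first by exists r.
  move=> q [a [b [ab ->]]]; rewrite ler_pdivrMr; first exact: H.
  exact: d_gt0.
rewrite /lip_const; have -> : [set r | exists x y, x <> y /\ r = `|f x - f y| / d x y] = set0.
  by apply/seteqP; split => q // Eq; apply: ne; exists q.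
by rewrite sup0.
Qed.

Definition lipK (w : S -> R) := exists2 K, 0 <= K & forall x y, `|w x - w y| <= K * d x y.

Lemma lipK_of (f : S -> R) : is_lipschitz d f -> lipK f.
Proof.
move=> hf; exists (lip_const d f); [exact: lip_ge0| move=> x y; exact: lip_ub].
Qed.

Lemma lipK_lin (a b : R) (u v : S -> R) : lipK u -> lipK v -> lipK (fun x => a * u x + b * v x).
Proof.
move=> [K K0 HK] [L L0 HL]; exists (`|a| * K + `|b| * L).
  by apply: addr_ge0; apply: mulr_ge0.
move=> x y.
have -> : a * u x + b * v x - (a * u y + b * v y) = a * (u x - u y) + b * (v x - v y) by ring.
apply: le_trans (ler_normD _ _) _; rewrite !normrM mulrDl -!mulrA.
by apply: lerD; apply: ler_wpM2l.
Qed.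

Lemma const_fin (w : S -> R) (V : set R) : metric_connected d -> lipK w -> finite_set V ->
  (forall x, V (w x)) -> forall x y, w x = w y.
Proof.
move=> hc [K K0 HK] fV HV x0.
pose U := [set x | w x = w x0].
have oU : metric_open d U.
  move=> x Ux; have [e e0 He] := sep_fin (w x0) fV.
  exists (e / (K + 1)); first by apply: divr_gt0; lra.
  move=> y dy; apply: contrapT => nU.
  have := He _ (HV y) nU; rewrite -Ux.
  have : `|w y - w x| <= K * d y x by apply: HK.
  have dxy : d y x = d x y by case: hd => _ [hs _].
  rewrite dxy => h1 h2.
  have h3 : K * d x y <= K * (e / (K + 1)) by apply: ler_wpM2l => //; exact: ltW.
  have h4 : K * (e / (K + 1)) < e.
    rewrite mulrA ltr_pdivrMr; last lra.
    nra.
  lra.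
have oC : metric_open d (~` U).
  move=> x Ux; have [e e0 He] := sep_fin (w x) fV.
  exists (e / (K + 1)); first by apply: divr_gt0; lra.
  move=> y dy; rewrite /U /= => Uy; apply: Ux.
  have [eq|ne] := pselect (w y = w x); first by rewrite /U /= -eq.
  have := He _ (HV y) ne.
  have : `|w y - w x| <= K * d y x by apply: HK.
  have dxy : d y x = d x y by case: hd => _ [hs _].
  rewrite dxy => h1 h2.
  have h3 : K * d x y <= K * (e / (K + 1)) by apply: ler_wpM2l => //; exact: ltW.
  have h4 : K * (e / (K + 1)) < e.
    rewrite mulrA ltr_pdivrMr; last lra.
    nra.
  lra.
case: (hc U oU oC) => hU y.
  have : U x0 by [].
  by rewrite hU.
have : U y by rewrite hU.
by rewrite /U /= => ->.
Qed.

End Met.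

Lemma part_FM (R : realType) (S : Type) (d : S -> S -> R)
  (hd : is_metric d) (hconn : metric_connected d) :
  J_FM d `<=` extreme_points (ball_FM d).
Proof.
move=> f [[bf fn] [s1 [P [fP [_ HP]]]]]; split; first by split.
move=> g h t [bg gn] [bh hn] t0 t1 ef; apply/funext => x0.
have fx z : f z = t * g z + (1 - t) * h z by rewrite ef.
move: gn hn; rewrite /FM_norm !ge_max => /andP[sg lg] /andP[sh lh].
have gb z : `|g z| <= 1 by apply: le_trans sg; apply: sup_norm_ub; case: bg.
have hb z : `|h z| <= 1 by apply: le_trans sh; apply: sup_norm_ub; case: bh.
have gl z y : `|g z - g y| <= d z y.
  apply: le_trans (lip_ub hd _ _ (proj2 bg)) _; rewrite ler_piMl //; exact: d_ge0.
have hl z y : `|h z - h y| <= d z y.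
  apply: le_trans (lip_ub hd _ _ (proj2 bh)) _; rewrite ler_piMl //; exact: d_ge0.
pose u := fun z => 1 * g z + (-1) * h z.
have HV z : ([set 0] `|` (u @` P)) (u z).
  have [Mz|nMz] := pselect (Mset f z).
    left; rewrite /= /u; move: Mz; rewrite /Mset /= s1 => /norm_cases[]; rewrite fx => e.
      have [] := conv_top (A := 1) (B := 1) t0 t1 (le_trans (ler_norm _) (gb z)) (le_trans (ler_norm _) (hb z)).
        by rewrite e; ring.
      move=> -> ->; ring.
    have [] := conv_top (a := - g z) (b := - h z) (A := 1) (B := 1) t0 t1.
    - by apply: le_trans (gb z); rewrite -normrN ler_norm.
    - by apply: le_trans (hb z); rewrite -normrN ler_norm.
    - have -> : t * 1 + (1 - t) * 1 = 1 by ring.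
      have -> : t * - g z + (1 - t) * - h z = - (t * g z + (1 - t) * h z) by ring.
      by rewrite e opprK.
    move=> e1 e2; have -> : g z = -1 by rewrite -e1 opprK.
    have -> : h z = -1 by rewrite -e2 opprK.
    ring.
  have [p Pp ep] := HP z nMz; right; exists p => //.
  have ef2 : f z - f p = t * (g z - g p) + (1 - t) * (h z - h p) by rewrite !fx; ring.
  move: ep => /norm_cases[] e.
    have [] := conv_top (A := d z p) (B := d z p) t0 t1 (le_trans (ler_norm _) (gl z p)) (le_trans (ler_norm _) (hl z p)).
      by rewrite -ef2 e; ring.
    move=> e1 e2; rewrite /u; lra.
  have [] := conv_top (a := - (g z - g p)) (b := - (h z - h p)) (A := d z p) (B := d z p) t0 t1.
  - by apply: le_trans (gl z p); rewrite -normrN ler_norm.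
  - by apply: le_trans (hl z p); rewrite -normrN ler_norm.
  - have -> : t * - (g z - g p) + (1 - t) * - (h z - h p) = - (f z - f p) by rewrite ef2; ring.
    by rewrite e; ring.
  move=> e1 e2; rewrite /u; lra.
have lu : lipK d u by apply: lipK_lin; apply: (lipK_of hd); [case: bg|case: bh].
have fV : finite_set ([set 0] `|` (u @` P)).
  by rewrite finite_setU; split; [exact: finite_set1|exact: finite_image].
have cst := const_fin hd hconn lu fV HV.
pose c := u x0.
have gc y : g y = h y + c by rewrite /c (cst x0 y) /u; ring.
have [c0|c0|c0] := ltrgtP c 0; last by move: (gc x0); rewrite c0 addr0.
- pose k := - (t * (1 - t) * c).
  have k0 : 0 < k by rewrite /k oppr_gt0 pmulr_rlt0 //; apply: mulr_gt0; lra.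
  have : sup_norm f <= 1 - k.
    apply: (sup_norm_le x0) => y; rewrite ler_norml fx gc.
    have := gb y; have := hb y; rewrite !ler_norml => /andP[h1 h2] /andP[g1 g2].
    move: (gc y) => gy; rewrite gy in g1 g2.
    apply/andP; rewrite /k; by case: (bnd_neg t0 t1 c0 g1 h2) => -> ->.
  rewrite s1; lra.
- pose k := t * (1 - t) * c.
  have k0 : 0 < k by rewrite /k; apply: mulr_gt0 => //; apply: mulr_gt0; lra.
  have : sup_norm f <= 1 - k.
    apply: (sup_norm_le x0) => y; rewrite ler_norml fx gc.
    have := gb y; have := hb y; rewrite !ler_norml => /andP[h1 h2] /andP[g1 g2].
    move: (gc y) => gy; rewrite gy in g1 g2.
    apply/andP; rewrite /k; by case: (bnd_pos t0 t1 c0 h1 g2) => -> ->.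
  rewrite s1; lra.
Qed.

Lemma part_BL (R : realType) (S : Type) (d : S -> S -> R)
  (hd : is_metric d) (hconn : metric_connected d) :
  J_BL d `<=` extreme_points (ball_BL d).
Proof.
have bnd (g : S -> R) z : ball_BL d g -> `|g z| <= sup_norm g /\ sup_norm g + lip_const d g <= 1.
  move=> [[bg lg] gn]; split; [exact: sup_norm_ub|exact: gn].
have gnorm (g : S -> R) z : ball_BL d g -> `|g z| <= 1.
  move=> bg; have [h1 h2] := bnd g z bg; have := lip_ge0 hd g; lra.
have bc (c : R) : `|c| = 1 -> ball_BL d (fun=> c).
  move=> c1; split.
    split; first by exists 1 => x; rewrite c1.
    by exists 0 => x y; rewrite subrr normr0 mul0r.
  rewrite /BL_norm.
  have -> : lip_const d (fun=> c) = 0.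
    apply/eqP; rewrite eq_le lip_ge0 // andbT; apply: lip_le => // x y _.
    by rewrite subrr normr0 mul0r.
  by rewrite addr0; apply: sup_le_M => // r [x _ <-]; rewrite c1.
move=> f [ef1|[ef1|]].
- split; first by rewrite ef1; apply: bc; rewrite normr1.
  move=> g h t bg bh t0 t1 ef; apply/funext => x.
  have e : (1:R) = t * g x + (1 - t) * h x by move: (f_equal (fun F => F x) ef); rewrite ef1.
  have [] := conv_top (A := 1) (B := 1) t0 t1 (le_trans (ler_norm _) (gnorm g x bg)) (le_trans (ler_norm _) (gnorm h x bh)).
    by rewrite -e; ring.
  by move=> -> ->.
- split; first by rewrite ef1; apply: bc; rewrite normrN normr1.
  move=> g h t bg bh t0 t1 ef; apply/funext => x.
  have e : (-1:R) = t * g x + (1 - t) * h x by move: (f_equal (fun F => F x) ef); rewrite ef1.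
  have [] := conv_top (a := - g x) (b := - h x) (A := 1) (B := 1) t0 t1.
  - by apply: le_trans (gnorm g x bg); rewrite -normrN ler_norm.
  - by apply: le_trans (gnorm h x bh); rewrite -normrN ler_norm.
  - have -> : t * - g x + (1 - t) * - h x = - (t * g x + (1 - t) * h x) by ring.
    by rewrite /= in e; rewrite -e; ring.
  by move=> e1 e2; rewrite -[g x]opprK -[h x]opprK e1 e2.
move=> [bf [fn1 [HM [P [fP [_ HP]]]]]]; split; first by [].
move=> g h t bg bh t0 t1 ef; apply/funext => x0.
have fx z : f z = t * g z + (1 - t) * h z by rewrite ef.
set s := sup_norm f; set Lf := lip_const d f.
set sg := sup_norm g; set Lg := lip_const d g.
set sh := sup_norm h; set Lh := lip_const d h.
have [_ ng] := bnd g x0 bg; have [_ nh] := bnd h x0 bh.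
have gb z : `|g z| <= sg by case: (bnd g z bg).
have hb z : `|h z| <= sh by case: (bnd h z bh).
have gl z y : `|g z - g y| <= Lg * d z y by apply: lip_ub => //; case: bg => [[]].
have hl z y : `|h z - h y| <= Lh * d z y by apply: lip_ub => //; case: bh => [[]].
have fl z y : `|f z - f y| <= Lf * d z y by apply: lip_ub => //; case: bf => [[]].
have Lg0 : 0 <= Lg := lip_ge0 hd g.
have Lh0 : 0 <= Lh := lip_ge0 hd h.
have sA : s <= t * sg + (1 - t) * sh.
  apply: (sup_norm_le x0) => z; rewrite fx.
  apply: le_trans (ler_normD _ _) _; rewrite !normrM (gtr0_norm t0) (gtr0_norm (_ : 0 < 1 - t)); last lra.
  by apply: lerD; apply: ler_wpM2l; try lra; [apply: gb|apply: hb].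
have LB : Lf <= t * Lg + (1 - t) * Lh.
  apply: lip_le => //.
    by apply: addr_ge0; apply: mulr_ge0 => //; lra.
  move=> z y _.
  have -> : f z - f y = t * (g z - g y) + (1 - t) * (h z - h y) by rewrite !fx; ring.
  apply: le_trans (ler_normD _ _) _; rewrite !normrM (gtr0_norm t0) (gtr0_norm (_ : 0 < 1 - t)); last lra.
  rewrite [X in _ <= X]mulrDl -!mulrA.
  by apply: lerD; apply: ler_wpM2l; try lra; [apply: gl|apply: hl].
have fn : s + Lf = 1 by [].
have [eg eh] : sg + Lg = 1 /\ sh + Lh = 1.
  have H1 : t * (sg + Lg) <= t * 1 by apply: ler_wpM2l; [exact: ltW|].
  have H2 : (1 - t) * (sh + Lh) <= (1 - t) * 1 by apply: ler_wpM2l; [lra|].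
  have E : t * (sg + Lg) + (1 - t) * (sh + Lh) = (t * sg + (1 - t) * sh) + (t * Lg + (1 - t) * Lh) by ring.
  apply: (conv_top t0 t1) => //; lra.
have E : t * (sg + Lg) + (1 - t) * (sh + Lh) = (t * sg + (1 - t) * sh) + (t * Lg + (1 - t) * Lh) by ring.
have es : s = t * sg + (1 - t) * sh by rewrite eg eh in E; lra.
have eLf : Lf = t * Lg + (1 - t) * Lh by rewrite eg eh in E; lra.
have [x1 Mx1 fx1] := (proj2 (HM s)) (or_introl erefl).
have [x2 Mx2 fx2] := (proj2 (HM (- s))) (or_intror erefl).
have s_ne1 : 1 - s != 0.
  apply/eqP => s1; have := fl x1 x2; rewrite fx1 fx2.
  have -> : Lf = 0 by lra.
  rewrite mul0r; have -> : s = 1 by lra.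
  by rewrite opprK normr_le0 (_ : 1 + 1 = 2) // pnatr_eq0.
have e1s : 1 - s = t * Lg + (1 - t) * Lh by lra.
pose mu := Lg - Lh.
pose c := fun z => (1 - s) * (1 * g z + (-1) * h z) + (- mu) * f z.
have topP z : f z = s -> g z = sg /\ h z = sh.
  move=> e; apply: (conv_top t0 t1); [exact: le_trans (ler_norm _) (gb z)|exact: le_trans (ler_norm _) (hb z)|].
  by rewrite -fx e es.
have botP z : f z = - s -> g z = - sg /\ h z = - sh.
  move=> e; have [] := conv_top (a := - g z) (b := - h z) (A := sg) (B := sh) t0 t1.
  - by apply: le_trans (gb z); rewrite -normrN ler_norm.
  - by apply: le_trans (hb z); rewrite -normrN ler_norm.
  - have -> : t * - g z + (1 - t) * - h z = - f z by rewrite fx; ring.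
    by rewrite e opprK.
  by move=> e1 e2; rewrite -e1 -e2 !opprK.
have ctop z : f z = s -> c z = sg - sh.
  move=> e; have [e1 e2] := topP z e; rewrite /c /mu e e1 e2.
  have -> : Lg = 1 - sg by lra.
  have -> : Lh = 1 - sh by lra.
  ring.
have cbot z : f z = - s -> c z = - (sg - sh).
  move=> e; have [e1 e2] := botP z e; rewrite /c /mu e e1 e2.
  have -> : Lg = 1 - sg by lra.
  have -> : Lh = 1 - sh by lra.
  ring.
pose V := [set sg - sh] `|` [set - (sg - sh)] `|` (c @` P).
have HV z : V (c z).
  have [Mz|nMz] := pselect (Mset f z).
    have : exists2 x, Mset f x & f x = f z by exists z.
    move=> /(proj1 (HM (f z))) [] e; left; [left; exact: ctop|right; exact: cbot].
  have [p Pp ep] := HP z nMz; right; exists p => //.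
  have ef2 : f z - f p = t * (g z - g p) + (1 - t) * (h z - h p) by rewrite !fx; ring.
  move: ep => /norm_cases[] e.
    have [] := conv_top (A := Lg * d z p) (B := Lh * d z p) t0 t1 (le_trans (ler_norm _) (gl z p)) (le_trans (ler_norm _) (hl z p)).
      by rewrite -ef2 e e1s; ring.
    move=> e1 e2; rewrite /c /mu.
    have -> : g z = g p + Lg * d z p by rewrite -e1; ring.
    have -> : h z = h p + Lh * d z p by rewrite -e2; ring.
    have -> : f z = f p + (1 - s) * d z p by rewrite -e; ring.
    rewrite e1s; ring.
  have [] := conv_top (a := - (g z - g p)) (b := - (h z - h p)) (A := Lg * d z p) (B := Lh * d z p) t0 t1.
  - by apply: le_trans (gl z p); rewrite -normrN ler_norm.
  - by apply: le_trans (hl z p); rewrite -normrN ler_norm.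
  - have -> : t * - (g z - g p) + (1 - t) * - (h z - h p) = - (f z - f p) by rewrite ef2; ring.
    by rewrite e e1s; ring.
  move=> e1 e2; rewrite /c /mu.
  have -> : g z = g p - Lg * d z p by rewrite -[_ * _]opprK -e1; ring.
  have -> : h z = h p - Lh * d z p by rewrite -[_ * _]opprK -e2; ring.
  have -> : f z = f p - (1 - s) * d z p by rewrite -[_ * d z p]opprK -e; ring.
  rewrite e1s; ring.
have lc : lipK d c.
  apply: lipK_lin; last by apply: (lipK_of hd); case: bf => [[]].
  by apply: lipK_lin; apply: (lipK_of hd); [case: bg => [[]]|case: bh => [[]]].
have fV : finite_set V.
  rewrite /V !finite_setU; split; [split; exact: finite_set1|exact: finite_image].
have cst := const_fin hd hconn lc fV HV.
have := cst x1 x2; rewrite (ctop x1 fx1) (cbot x2 fx2) => e12.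
have dz : sg - sh = 0 by lra.
have := cst x1 x0; rewrite (ctop x1 fx1) dz /c /mu.
have -> : Lg - Lh = 0 by lra.
move=> e; have : (1 - s) * (g x0 - h x0) == 0 by apply/eqP; rewrite e; ring.
rewrite mulf_eq0 (negbTE s_ne1) /= subr_eq0 => /eqP //.
Qed.

Theorem proposition5p3 (R : realType) (S : Type) (d : S -> S -> R)
  (hd : is_metric d) (hconn : metric_connected d) :
  J_FM d `<=` extreme_points (ball_FM d) /\
  J_BL d `<=` extreme_points (ball_BL d).
Proof. by split; [apply: part_FM|apply: part_BL]. Qed.
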